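(* Let $G=(V,E)$ be a finite connected graph and let $x,y,v,w\in V$. Suppose there is a nonempty set $C\subseteq V$ with diameter $D=\max_{c,c'\in C} d(c,c')$ such that, for every two vertices $a,b\in\{x,y,v,w\}$, every shortest path between $a$ and $b$ contains a vertex of $C$. Then $\delta(x,y,v,w)\le D$.
   Context: $G$ is an undirected graph in which every edge has length $1$, and $d(a,b)$ denotes the shortest-path distance between vertices $a,b$. For vertices $x,y,v,w$, the hyperbolicity $\delta(x,y,v,w)$ of the $4$-tuple is defined as half the difference between the largest and the second largest of the three sums $d(x,y)+d(v,w)$, $d(x,v)+d(y,w)$, $d(x,w)+d(y,v)$ (if the two largest coincide, $\delta=0$). *)

(* Defs.v *)
From mathcomp Require Import all_boot all_order all_algebra.
Set Implicit Arguments. Unset Strict Implicit. Unset Printing Implicit Defensive.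
Import Order.TTheory GRing.Theory Num.Theory.

(* A walk from a is a
   sequence p with [path e a p]; its vertex sequence is [a :: p], its end is
   [last a p] and its length (number of edges) is [size p]. *)

Definition walkn (T : finType) (e : rel T) (a b : T) (n : nat) : bool :=
  [exists t : n.-tuple T, path e a t && (last a t == b)].

(* graph distance: the least n with a walk of length n from a to b.
   In a connected graph this least n is < #|T|, so searching 0..#|T|-1
   gives exactly the shortest-path distance. *)
Definition gdist (T : finType) (e : rel T) (a b : T) : nat :=
  find (walkn e a b) (iota 0 #|T|).

Definition shortest_path (T : finType) (e : rel T) (a b : T) (p : seq T) : Prop :=
  path e a p /\ last a p = b /\ size p = gdist e a b.

Definition set_diam (T : finType) (e : rel T) (C : {set T}) : nat :=
  \max_(c in C) \max_(c' in C) gdist e c c'.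

(* hyperbolicity of the 4-tuple (x,y,v,w): half of (largest - second largest)
   of the three distance sums *)
Definition hyperbolicity (T : finType) (e : rel T) (x y v w : T) : rat :=
  let s1 := (gdist e x y + gdist e v w)%N in
  let s2 := (gdist e x v + gdist e y w)%N in
  let s3 := (gdist e x w + gdist e y v)%N in
  let mx := maxn s1 (maxn s2 s3) in
  let mn := minn s1 (minn s2 s3) in
  let md := (s1 + s2 + s3 - mx - mn)%N in
  ((mx - md)%N)%:R / 2.

(* Main.v *)
Require Import Defs.
From mathcomp Require Import all_boot all_order all_algebra.
From mathcomp Require Import zify.
Import Order.TTheory GRing.Theory Num.Theory.

Lemma arith s1 s2 s3 D :
  (s1 <= s2 + 2 * D \/ s1 = s3) -> (s1 <= s3 + 2 * D \/ s1 = s2) ->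
  (s2 <= s1 + 2 * D \/ s2 = s3) -> (s2 <= s3 + 2 * D \/ s2 = s1) ->
  (s3 <= s1 + 2 * D \/ s3 = s2) -> (s3 <= s2 + 2 * D \/ s3 = s1) ->
  maxn s1 (maxn s2 s3) - (s1 + s2 + s3 - maxn s1 (maxn s2 s3) - minn s1 (minn s2 s3)) <= D * 2.
Proof.
move=> h1 h2 h3 h4 h5 h6.
case: (leqP s2 s3) => a; case: (leqP s1 s3) => b; case: (leqP s1 s2) => c;
rewrite ?(maxn_idPl (ltnW _)) ?(maxn_idPr _) ?(minn_idPl _) ?(minn_idPr (ltnW _)) //; lia.
Qed.

Section G.
Variables (T : finType) (e : rel T).
Hypothesis e_sym : symmetric e.
Hypothesis e_conn : forall a b : T, connect e a b.

Lemma gdist_le a p : path e a p -> gdist e a (last a p) <= size p.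
Proof.
move=> pp.
have W : walkn e a (last a p) (size p).
  by apply/existsP; exists (in_tuple p); rewrite /= pp eqxx.
rewrite /gdist; case: (ltnP (size p) #|T|) => h.
  rewrite leqNgt; apply/negP => lt.
  have := before_find 0 lt; rewrite nth_iota // add0n W //.
by apply: leq_trans (find_size _ _) _; rewrite size_iota.
Qed.

Lemma gdist_walk a b : walkn e a b (gdist e a b).
Proof.
have [p pp ->] := connectP (e_conn a b).
case: (shortenP pp) => p' pp' up' _.
have hs : size p' < #|T|.
  have := max_card (mem (a :: p')); rewrite (card_uniqP up') /=. by [].
have W : walkn e a (last a p') (size p').
  by apply/existsP; exists (in_tuple p'); rewrite /= pp' eqxx.
have H : has (walkn e a (last a p')) (iota 0 #|T|).
  by apply/hasP; exists (size p') => //; rewrite mem_iota.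
have hf : find (walkn e a (last a p')) (iota 0 #|T|) < #|T|.
  by rewrite -{2}(size_iota 0 #|T|) -has_find.
by have := nth_find 0 H; rewrite nth_iota ?add0n.
Qed.

Lemma gdist_path a b : exists p, [/\ path e a p, last a p = b & size p = gdist e a b].
Proof.
have /existsP [t /andP [pt /eqP lt]] := gdist_walk a b.
by exists t; rewrite size_tuple.
Qed.

Lemma gdist_tri a b c : gdist e a c <= gdist e a b + gdist e b c.
Proof.
have [p [pp lp sp]] := gdist_path a b.
have [q [pq lq sq]] := gdist_path b c.
have := @gdist_le a (p ++ q).
rewrite cat_path pp lp pq last_cat lp lq size_cat sp sq; apply => //.
Qed.

Lemma rev_walk a p : path e a p -> exists q,
  [/\ path e (last a p) q, last (last a p) q = a & size q = size p].
Proof.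
elim: p a => [|z p IH] a /=; first by exists [::].
case/andP => eaz pz; have [q [pq lq sq]] := IH z pz.
exists (rcons q a); rewrite rcons_path pq lq last_rcons size_rcons sq.
by rewrite e_sym eaz.
Qed.

Lemma gdist_sym a b : gdist e a b = gdist e b a.
Proof.
suff H : forall a b, gdist e b a <= gdist e a b.
  by apply/eqP; rewrite eqn_leq !H.
move=> a' b'; have [p [pp lp sp]] := gdist_path a' b'.
have [q [pq lq sq]] := @rev_walk a' p pp.
by have := @gdist_le _ _ pq; rewrite lq lp sq sp.
Qed.

Lemma gdist_on a b p c : shortest_path e a b p -> c \in a :: p ->
  gdist e a c + gdist e c b <= gdist e a b.
Proof.
case=> pp [lp sp]; rewrite in_cons; case/orP.
  move/eqP ->; have := @gdist_le a [::] (erefl _) => /= h.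
  by move: h; rewrite leqn0 => /eqP ->.
move=> cp; move: pp lp sp; case/splitPr: cp => p1 p2.
rewrite cat_path /= last_cat /= => /and3P [p1p e1 p2p] lp sp.
have h1 := @gdist_le a (rcons p1 c).
rewrite rcons_path p1p e1 last_rcons size_rcons in h1.
have h2 := @gdist_le _ _ p2p; rewrite lp in h2.
rewrite -sp size_cat /=; have := h1 isT; lia.
Qed.

End G.

Theorem proposition2 (T : finType) (e : rel T)
  (e_sym : symmetric e) (e_irr : irreflexive e)
  (e_conn : forall a b : T, connect e a b)
  (x y v w : T) (C : {set T}) (C_ne : C != set0)
  (hC : forall a b : T, a \in [:: x; y; v; w] -> b \in [:: x; y; v; w] ->
        a != b ->
        forall p : seq T, shortest_path e a b p -> has (mem C) (a :: p)) :
  (hyperbolicity e x y v w <= (set_diam e C)%:R)%R.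
Proof.
set D := set_diam e C.
have dC : forall c c', c \in C -> c' \in C -> gdist e c c' <= D.
  move=> c c' hc hc'; apply: leq_trans (leq_bigmax_cond _ hc).
  by rewrite (bigD1 c') //= leq_maxl.
have onC : forall a b, a \in [:: x; y; v; w] -> b \in [:: x; y; v; w] -> a != b ->
    exists2 c, c \in C & gdist e a c + gdist e c b <= gdist e a b.
  move=> a b ha hb nab; have [p [pp lp sp]] := @gdist_path T e e_conn a b.
  have sh : shortest_path e a b p by [].
  have /hasP [c cin cC] := hC a b ha hb nab p sh.
  by exists c => //; exact: (@gdist_on T e _ _ _ _ sh cin).
have key : forall a b c d, a \in [:: x; y; v; w] -> b \in [:: x; y; v; w] ->
    c \in [:: x; y; v; w] -> d \in [:: x; y; v; w] ->
    gdist e a b + gdist e c d <= gdist e a c + gdist e b d + 2 * D \/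
    gdist e a b + gdist e c d = gdist e a d + gdist e b c.
  move=> a b c d ha hb hc hd.
  have [<-|nac] := eqVneq a c.
    by right; rewrite (@gdist_sym T e e_sym e_conn a b) addnC.
  have [<-|nbd] := eqVneq b d.
    by right; rewrite (@gdist_sym T e e_sym e_conn c b).
  left.
  have [c1 c1C h1] := onC a c ha hc nac.
  have [c2 c2C h2] := onC b d hb hd nbd.
  have t1 := @gdist_tri T e e_conn a c1 b.
  have t2 := @gdist_tri T e e_conn c1 c2 b.
  have t3 := @gdist_tri T e e_conn c c1 d.
  have t4 := @gdist_tri T e e_conn c1 c2 d.
  have s1 := @gdist_sym T e e_sym e_conn c1 c.
  have s2 := @gdist_sym T e e_sym e_conn c2 b.
  have := dC c1 c2 c1C c2C; lia.
have ix : x \in [:: x; y; v; w] by rewrite !inE eqxx.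
have iy : y \in [:: x; y; v; w] by rewrite !inE eqxx !orbT.
have iv : v \in [:: x; y; v; w] by rewrite !inE eqxx !orbT.
have iw : w \in [:: x; y; v; w] by rewrite !inE eqxx !orbT.
have sy := @gdist_sym T e e_sym e_conn v y.
have sw := @gdist_sym T e e_sym e_conn w y.
have svw := @gdist_sym T e e_sym e_conn w v.
rewrite /hyperbolicity.
set s1 := (gdist e x y + gdist e v w)%N.
set s2 := (gdist e x v + gdist e y w)%N.
set s3 := (gdist e x w + gdist e y v)%N.
have hn := @arith s1 s2 s3 D.
have k1 : (s1 <= s2 + 2 * D \/ s1 = s3) by case: (key _ _ _ _ ix iy iv iw) => h; [left|right]; move: h; rewrite /s1 /s2 /s3; lia.
have k2 : (s1 <= s3 + 2 * D \/ s1 = s2) by case: (key _ _ _ _ ix iy iw iv) => h; [left|right]; move: h; rewrite /s1 /s2 /s3; lia.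
have k3 : (s2 <= s1 + 2 * D \/ s2 = s3) by case: (key _ _ _ _ ix iv iy iw) => h; [left|right]; move: h; rewrite /s1 /s2 /s3; lia.
have k4 : (s2 <= s3 + 2 * D \/ s2 = s1) by case: (key _ _ _ _ ix iv iw iy) => h; [left|right]; move: h; rewrite /s1 /s2 /s3; lia.
have k5 : (s3 <= s1 + 2 * D \/ s3 = s2) by case: (key _ _ _ _ ix iw iy iv) => h; [left|right]; move: h; rewrite /s1 /s2 /s3; lia.
have k6 : (s3 <= s2 + 2 * D \/ s3 = s1) by case: (key _ _ _ _ ix iw iv iy) => h; [left|right]; move: h; rewrite /s1 /s2 /s3; lia.
have {}hn := hn k1 k2 k3 k4 k5 k6.
rewrite ler_pdivrMr ?ltr0n // -natrM ler_nat //.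
Qed.
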